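(* Consider the BSSC$(\alpha,\beta)$ with $\alpha+\beta\ne1$, used with feedback, with the transmission cost $\gamma(a_i,b_{i-1})=1$ if $a_i=b_{i-1}$ and $0$ otherwise, and average cost constraint $\frac1{n+1}\mathbf E[\sum_{i=0}^n\gamma(A_i,B_{i-1})]\le\kappa$. Let $\nu,\lambda$ be as defined below and $\kappa_{max}=\nu$. (a) For $\kappa\in[0,\kappa_{max}]$, every $n$ and every initial state $b_{-1}$, the constrained finite-time feedback capacity $C^{FB,BSSC}_{A^n\to B^n}(\kappa)$ is attained by the time-invariant input $\pi_i(a_i|a^{i-1},b^{i-1})=\pi^{TI}(a_i|b_{i-1})$, $i=0,\dots,n$, where $\pi^{TI}(a|b)=\kappa$ if $a=b$ and $1-\kappa$ if $a\ne b$; the corresponding output transition is time-invariant with $\mathbf P^{TI}(b'|b)=\bar\lambda$ if $b'=b$ and $1-\bar\lambda$ otherwise, where $\bar\lambda=\alpha\kappa+(1-\kappa)(1-\beta)$; and $$C^{FB,BSSC}_{A^n\to B^n}(\kappa)=(n+1)\max_{\pi(\cdot|b_{-1}):\ \mathbf E[\gamma(A_0,b_{-1})]\le\kappa}I(A_0;B_0|B_{-1}=b_{-1})\quad\forall b_{-1}\in\{0,1\}.$$ (b) The per unit time feedback capacity with cost is $$C^{FB,BSSC}_{A^\infty\to B^\infty}(\kappa)=\begin{cases}H(\bar\lambda)-\kappa H(\alpha)-(1-\kappa)H(\beta),&\kappa\le\kappa_{max},\\ H(\lambda)-\kappa_{max}H(\alpha)-(1-\kappa_{max})H(\beta),&\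kappa>\kappa_{max}.\end{cases}$$
   Context: BSSC$(\alpha,\beta)$: $\mathbb A=\mathbb B=\{0,1\}$, $\mathbf P(b_i=a_i|a_i,b_{i-1})=\alpha$ if $a_i=b_{i-1}$ and $=\beta$ if $a_i\ne b_{i-1}$, time-invariant. $H$ is the binary entropy (base 2). $\mu=\frac{H(\beta)-H(\alpha)}{1-\alpha-\beta}$, $\lambda=\frac1{1+2^\mu}$, $\nu=\frac{1-(1-\beta)(1+2^\mu)}{(\alpha+\beta-1)(1+2^\mu)}$. With fixed initial state $b_{-1}$ known to encoder and decoder, $C^{FB,BSSC}_{A^n\to B^n}(\kappa)=\sup\sum_{i=0}^nI(A^i;B_i|B^{i-1})$ over feedback input distributions $\{\mathbf P(a_i|a^{i-1},b^{i-1})\}_{i=0}^n$ satisfying the average cost constraint, and $C^{FB,BSSC}_{A^\infty\to B^\infty}(\kappa)=\lim_{n\to\infty}\frac1{n+1}C^{FB,BSSC}_{A^n\to B^n}(\kappa)$. *)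

(* Defs.v *)
From Stdlib Require Import Reals List.
Import ListNotations.
Open Scope R_scope.

Definition log2 (x : R) : R := ln x / ln 2.

Definition plog (p r : R) : R := if Req_EM_T p 0 then 0 else p * log2 r.

Definition Hb (p : R) : R := - plog p p - plog (1 - p) (1 - p).

(** * The BSSC(alpha,beta) channel: Q b a bp = P(b_i = b | a_i = a, b_{i-1} = bp) *)
Definition bssc_Q (al be : R) (b a bp : bool) : R :=
  if Bool.eqb a bp
  then (if Bool.eqb b a then al else 1 - al)
  else (if Bool.eqb b a then be else 1 - be).

Definition gam (a bp : bool) : R := if Bool.eqb a bp then 1 else 0.

Definition pr (p : R) (a : bool) : R := if a then p else 1 - p.

(** Feedback input distribution: [pol i xs ys] = P(a_i = true | a^{i-1} = xs, b^{i-1} = ys)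
    where xs, ys are the lists (a_0,...,a_{i-1}), (b_0,...,b_{i-1}). The fixed initial
    state b_{-1} is a parameter known to the encoder. *)
Definition policy := nat -> list bool -> list bool -> R.
Definition valid_policy (pol : policy) : Prop := forall i xs ys, 0 <= pol i xs ys <= 1.

Fixpoint blists (k : nat) : list (list bool) :=
  match k with
  | O => [[]]
  | S k' => map (cons false) (blists k') ++ map (cons true) (blists k')
  end.
Definition sumL {A : Type} (L : list A) (f : A -> R) : R :=
  fold_right (fun x acc => f x + acc) 0 L.
Definition sumB (f : bool -> R) : R := f false + f true.

Section Process.
Variables (al be : R) (b0 : bool) (pol : policy).

(** Joint law of (A^{k-1}, B^{k-1}) given B_{-1} = b0:
    prod_{j<k} pi_j(a_j | a^{j-1}, b^{j-1}) Q(b_j | a_j, b_{j-1}). *)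
Definition joint (k : nat) (xs ys : list bool) : R :=
  fold_right Rmult 1
    (map (fun j => pr (pol j (firstn j xs) (firstn j ys)) (nth j xs false)
                   * bssc_Q al be (nth j ys false) (nth j xs false) (last (firstn j ys) b0))
         (seq 0 k)).

(** Marginals at time i (x = a^i, y = b^i, z = b^{i-1}). *)
Definition P_i (i : nat) (x y : list bool) : R := joint (S i) x y.
Definition P_z (i : nat) (z : list bool) : R :=
  sumL (blists (S i)) (fun x => sumB (fun c => P_i i x (z ++ [c]))).
Definition P_xz (i : nat) (x z : list bool) : R := sumB (fun c => P_i i x (z ++ [c])).
Definition P_yz (i : nat) (y : list bool) : R := sumL (blists (S i)) (fun x => P_i i x y).

(** Conditional mutual information I(A^i ; B_i | B^{i-1}). *)
Definition cmi_term (i : nat) : R :=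
  sumL (blists (S i)) (fun x => sumL (blists (S i)) (fun y =>
    plog (P_i i x y)
         (P_i i x y * P_z i (firstn i y) / (P_xz i x (firstn i y) * P_yz i y)))).

Definition DI (n : nat) : R := sum_f_R0 cmi_term n.

Definition cost_term (i : nat) : R :=
  sumL (blists (S i)) (fun x => sumL (blists (S i)) (fun y =>
    P_i i x y * gam (nth i x false) (last (firstn i y) b0))).
Definition avg_cost (n : nat) : R := / INR (S n) * sum_f_R0 cost_term n.

End Process.

Definition feasible (al be : R) (b0 : bool) (n : nat) (ka : R) (pol : policy) : Prop :=
  valid_policy pol /\ avg_cost al be b0 pol n <= ka.

(** Set of achievable directed-information values; C_n(kappa) is its sup. *)
Definition DIset (al be : R) (b0 : bool) (n : nat) (ka : R) (r : R) : Prop :=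
  exists pol, feasible al be b0 n ka pol /\ r = DI al be b0 pol n.

Definition is_max (S : R -> Prop) (m : R) : Prop := S m /\ (forall r, S r -> r <= m).

(** Time-invariant input pi^TI(a | b_{i-1}) = kappa if a = b_{i-1}, 1 - kappa otherwise. *)
Definition pi_TI (b0 : bool) (ka : R) : policy :=
  fun i xs ys => if last ys b0 then ka else 1 - ka.

Definition MI2 (J : bool -> bool -> R) : R :=
  sumB (fun a => sumB (fun b =>
    plog (J a b) (J a b / (sumB (fun b' => J a b') * sumB (fun a' => J a' b))))).

(** Single-letter values I(A_0;B_0 | B_{-1}=b0) over pi(.|b0) with E[gamma(A_0,b0)] <= kappa;
    p = P(A_0 = true). *)
Definition SLset (al be : R) (b0 : bool) (ka : R) (r : R) : Prop :=
  exists p, 0 <= p <= 1 /\ pr p b0 <= ka /\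
            r = MI2 (fun a b => pr p a * bssc_Q al be b a b0).

Definition mu (al be : R) : R := (Hb be - Hb al) / (1 - al - be).
Definition lam (al be : R) : R := / (1 + Rpower 2 (mu al be)).
Definition nu (al be : R) : R :=
  (1 - (1 - be) * (1 + Rpower 2 (mu al be))) / ((al + be - 1) * (1 + Rpower 2 (mu al be))).
Definition lambar (al be ka : R) : R := al * ka + (1 - ka) * (1 - be).

(* Main.v *)
Require Import Defs.
From Stdlib Require Import Reals List Lra Lia Psatz.
Import ListNotations.
Open Scope R_scope.

Lemma sumL_ext_in {A} (L : list A) f g :
  (forall x, In x L -> f x = g x) -> sumL L f = sumL L g.
Proof.
  induction L as [|x L IH]; simpl; intros H; auto.
  rewrite H by auto. rewrite IH; auto.
Qed.

Lemma sumL_plus {A} (L : list A) f g :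
  sumL L (fun x => f x + g x) = sumL L f + sumL L g.
Proof. induction L; simpl; [lra|]. rewrite IHL. lra. Qed.

Lemma sumL_minus {A} (L : list A) f g :
  sumL L (fun x => f x - g x) = sumL L f - sumL L g.
Proof. induction L; simpl; [lra|]. rewrite IHL. lra. Qed.

Lemma sumL_scal {A} (L : list A) c f :
  sumL L (fun x => c * f x) = c * sumL L f.
Proof. induction L; simpl; [lra|]. rewrite IHL. lra. Qed.

Lemma sumL_scal_r {A} (L : list A) c f :
  sumL L (fun x => f x * c) = sumL L f * c.
Proof. induction L; simpl; [lra|]. rewrite IHL. lra. Qed.

Lemma sumL_zero {A} (L : list A) : sumL L (fun _ => 0) = 0.
Proof. induction L; simpl; [lra|]. rewrite IHL. lra. Qed.

Lemma sumL_app {A} (L1 L2 : list A) f :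
  sumL (L1 ++ L2) f = sumL L1 f + sumL L2 f.
Proof. induction L1; simpl; [lra|]. rewrite IHL1. lra. Qed.

Lemma sumL_map {A B} (L : list A) (h : A -> B) f :
  sumL (map h L) f = sumL L (fun x => f (h x)).
Proof. induction L; simpl; auto. rewrite IHL. auto. Qed.

Lemma sumL_nonneg {A} (L : list A) f :
  (forall x, In x L -> 0 <= f x) -> 0 <= sumL L f.
Proof.
  induction L as [|x L IH]; simpl; intros H; [lra|].
  assert (0 <= f x) by auto. assert (0 <= sumL L f) by auto. lra.
Qed.

Lemma sumL_ge_term {A} (L : list A) f y :
  (forall x, In x L -> 0 <= f x) -> In y L -> f y <= sumL L f.
Proof.
  induction L as [|x L IH]; simpl; intros H Hy; [contradiction|].
  destruct Hy as [<-|Hy].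
  - assert (0 <= sumL L f) by (apply sumL_nonneg; auto). lra.
  - assert (f y <= sumL L f) by auto. assert (0 <= f x) by auto. lra.
Qed.

Lemma sumL_exchange {A B} (L1 : list A) (L2 : list B) (g : A -> B -> R) :
  sumL L1 (fun x => sumL L2 (fun y => g x y)) = sumL L2 (fun y => sumL L1 (fun x => g x y)).
Proof.
  induction L1 as [|x L1 IH]; simpl.
  - rewrite sumL_zero. auto.
  - rewrite IH. rewrite <- sumL_plus. auto.
Qed.

Lemma sumB_sumL {A} (L : list A) (g : bool -> A -> R) :
  sumB (fun a => sumL L (g a)) = sumL L (fun x => sumB (fun a => g a x)).
Proof. unfold sumB. rewrite <- sumL_plus. auto. Qed.

Lemma sumL_eq0 {A} (L : list A) f :
  (forall x, In x L -> 0 <= f x) -> sumL L f = 0 -> forall x, In x L -> f x = 0.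
Proof.
  intros H H0 x Hx. pose proof (sumL_ge_term L f x H Hx). specialize (H x Hx). lra.
Qed.

Lemma blists_S k (F : list bool -> R) :
  sumL (blists (S k)) F = sumL (blists k) (fun z => sumB (fun c => F (z ++ [c]))).
Proof.
  revert F. induction k; intros F.
  - simpl. unfold sumB. lra.
  - change (blists (S (S k))) with (map (cons false) (blists (S k)) ++ map (cons true) (blists (S k))).
    rewrite sumL_app, !sumL_map.
    rewrite (IHk (fun z => F (false :: z))), (IHk (fun z => F (true :: z))).
    change (blists (S k)) with (map (cons false) (blists k) ++ map (cons true) (blists k)).
    rewrite sumL_app, !sumL_map. reflexivity.
Qed.

Lemma blists_length k z : In z (blists k) -> length z = k.
Proof.
  revert z. induction k; simpl; intros z H.
  - destruct H as [<-|[]]; auto.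
  - apply in_app_or in H. destruct H as [H|H]; apply in_map_iff in H;
    destruct H as [z' [<- H]]; simpl; f_equal; auto.
Qed.

Lemma blists_In k z : length z = k -> In z (blists k).
Proof.
  revert k. induction z as [|a z IH]; intros k H; simpl in H; subst; simpl.
  - auto.
  - apply in_or_app. destruct a; [right|left]; apply in_map; auto.
Qed.

Lemma sumB_ext f g : (forall a, f a = g a) -> sumB f = sumB g.
Proof. intros H; unfold sumB; rewrite !H; auto. Qed.

Lemma fold_Rmult_acc (l : list R) x : fold_right Rmult x l = fold_right Rmult 1 l * x.
Proof. induction l; simpl; [lra|]. rewrite IHl. lra. Qed.

Lemma firstn_snoc {A} (l : list A) a j : (j <= length l)%nat -> firstn j (l ++ [a]) = firstn j l.
Proof.
  intros H. rewrite firstn_app. replace (j - length l)%nat with 0%nat by lia.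
  simpl. apply app_nil_r.
Qed.

Lemma Q_sum al be a s : bssc_Q al be false a s + bssc_Q al be true a s = 1.
Proof. unfold bssc_Q; destruct a, s; simpl; lra. Qed.

Lemma Q_bounds al be c a s : 0 <= al <= 1 -> 0 <= be <= 1 -> 0 <= bssc_Q al be c a s <= 1.
Proof. unfold bssc_Q; intros; destruct c, a, s; simpl; lra. Qed.

Lemma pr_bounds p a : 0 <= p <= 1 -> 0 <= pr p a <= 1.
Proof. intros; destruct a; simpl; lra. Qed.

Lemma pr_sum p : pr p false + pr p true = 1.
Proof. simpl; lra. Qed.

Section Joint.
Variables (al be : R) (b0 : bool) (pol : policy).
Hypothesis Hal : 0 <= al <= 1.
Hypothesis Hbe : 0 <= be <= 1.
Hypothesis Hpol : valid_policy pol.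

Lemma joint_snoc k xs ys a c :
  length xs = k -> length ys = k ->
  joint al be b0 pol (S k) (xs ++ [a]) (ys ++ [c]) =
  joint al be b0 pol k xs ys * (pr (pol k xs ys) a * bssc_Q al be c a (last ys b0)).
Proof.
  intros Hx Hy. unfold joint. rewrite seq_S, map_app, fold_right_app. simpl.
  rewrite fold_Rmult_acc. f_equal.
  - f_equal. apply map_ext_in. intros j Hj. apply in_seq in Hj.
    rewrite !firstn_snoc by lia. rewrite !app_nth1 by lia. reflexivity.
  - rewrite !firstn_snoc by lia.
    assert (E1: firstn k xs = xs) by (subst; apply firstn_all).
    assert (E2: firstn k ys = ys) by (rewrite <- Hy; apply firstn_all).
    assert (E3: nth k (xs++[a]) false = a) by (subst; apply nth_middle).
    assert (E4: nth k (ys++[c]) false = c) by (rewrite <- Hy; apply nth_middle).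
    rewrite E1, E2, E3, E4. lra.
Qed.

Lemma joint_nonneg k xs ys : 0 <= joint al be b0 pol k xs ys.
Proof.
  unfold joint. generalize (seq 0 k). intros l. induction l; simpl; [lra|].
  apply Rmult_le_pos; auto.
  apply Rmult_le_pos; [apply pr_bounds, Hpol | apply Q_bounds; auto].
Qed.

Lemma joint_0 : joint al be b0 pol 0 [] [] = 1.
Proof. reflexivity. Qed.

End Joint.

Definition qs (al be : R) (c s : bool) := if Bool.eqb c s then al else 1 - al.
Definition qn (al be : R) (c s : bool) := if Bool.eqb c s then 1 - be else be.
Definition Fk (al be x : R) := Hb (lambar al be x) - x * Hb al - (1 - x) * Hb be.
Definition gfun (y : R) := log2 ((1 - y) / y).
Definition dk (al be k : R) := (al + be - 1) * gfun (lambar al be k) - Hb al + Hb be.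

Lemma plog_eq p r : plog p r = p * log2 r.
Proof. unfold plog. destruct (Req_EM_T p 0); subst; ring. Qed.

Lemma ln2_pos : 0 < ln 2.
Proof. pose proof ln_lt_2. lra. Qed.

Lemma log2_mult x y : 0 < x -> 0 < y -> log2 (x * y) = log2 x + log2 y.
Proof. intros. unfold log2. rewrite ln_mult by auto. field. pose proof ln2_pos; lra. Qed.

Lemma log2_inv x : 0 < x -> log2 (/ x) = - log2 x.
Proof. intros. unfold log2. rewrite ln_Rinv by auto. field. pose proof ln2_pos; lra. Qed.

Lemma log2_div x y : 0 < x -> 0 < y -> log2 (x / y) = log2 x - log2 y.
Proof. intros. unfold Rdiv. rewrite log2_mult, log2_inv; try lra. apply Rinv_0_lt_compat; auto. Qed.

Lemma log2_1 : log2 1 = 0.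
Proof. unfold log2. rewrite ln_1. field. pose proof ln2_pos; lra. Qed.

Lemma log2_lt x y : 0 < x -> x < y -> log2 x < log2 y.
Proof.
  intros. unfold log2. unfold Rdiv. apply Rmult_lt_compat_r.
  - apply Rinv_0_lt_compat, ln2_pos.
  - apply ln_increasing; auto.
Qed.

Lemma log2_Rpower2 x : log2 (Rpower 2 x) = x.
Proof. unfold log2. rewrite ln_Rpower. field. pose proof ln2_pos; lra. Qed.

Lemma xlog_div x W : 0 <= x -> 0 < W -> x * log2 (x / W) = x * log2 x - x * log2 W.
Proof.
  intros Hx HW. destruct (Req_dec x 0) as [->|Hne]; [ring|].
  rewrite log2_div; [ring|lra|lra].
Qed.

Lemma term_eq m Q W Y : 0 <= m -> 0 <= Q -> m * Q <= W -> m * Q <= Y ->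
  plog (m * Q) (m * Q * W / (m * Y)) = m * Q * log2 Q + m * Q * log2 W - m * Q * log2 Y.
Proof.
  intros Hm HQ HW HY. rewrite plog_eq.
  destruct (Req_dec (m * Q) 0) as [E|E]; [rewrite E; ring|].
  assert (0 < m * Q) by (destruct (Rle_lt_or_eq _ _ (Rmult_le_pos _ _ Hm HQ)); [auto|congruence]).
  assert (m <> 0) by (intro; subst; apply E; ring).
  assert (0 < Q) by (destruct (Rle_lt_or_eq _ _ HQ); auto; subst; exfalso; apply E; ring).
  replace (m * Q * W / (m * Y)) with (Q * W / Y) by (field; split; lra).
  rewrite log2_div, log2_mult; try lra. nra.
Qed.

Lemma Hb_sym p : Hb (1 - p) = Hb p.
Proof. unfold Hb. replace (1 - (1 - p)) with p by ring. ring. Qed.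

Lemma xln_le y y0 : 0 <= y -> 0 < y0 -> y * ln y0 - y * ln y <= y0 - y.
Proof.
  intros Hy Hy0. destruct (Req_dec y 0) as [->|Hne]; [lra|].
  assert (0 < y) by lra.
  assert (ln (y0 / y) <= y0 / y - 1).
  { pose proof (exp_ineq1_le (ln (y0 / y))). rewrite exp_ln in H0; [lra|].
    apply Rdiv_lt_0_compat; auto. }
  unfold Rdiv in H0. rewrite ln_mult, ln_Rinv in H0; auto; [|apply Rinv_0_lt_compat; auto].
  assert (y * (ln y0 + - ln y) <= y * (y0 * / y - 1)) by (apply Rmult_le_compat_l; lra).
  replace (y * (y0 * / y - 1)) with (y0 - y) in H1 by (field; lra). lra.
Qed.

Lemma Hb_tangent y0 y : 0 < y0 < 1 -> 0 <= y <= 1 ->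
  Hb y <= Hb y0 + (y - y0) * gfun y0.
Proof.
  intros H0 H. unfold Hb, gfun. rewrite !plog_eq.
  rewrite log2_div by lra. unfold log2.
  pose proof (xln_le y y0 ltac:(lra) ltac:(lra)).
  pose proof (xln_le (1 - y) (1 - y0) ltac:(lra) ltac:(lra)).
  pose proof ln2_pos.
  assert (y * ln y0 - y * ln y + ((1 - y) * ln (1 - y0) - (1 - y) * ln (1 - y)) <= 0) by lra.
  assert ((y * ln y0 - y * ln y + ((1 - y) * ln (1 - y0) - (1 - y) * ln (1 - y))) / ln 2 <= 0).
  { unfold Rdiv. apply Rmult_le_0_r_reg with (r := ln 2) || idtac.
    apply Rmult_le_0_compat_neg_l_r || (apply Ropp_le_cancel; rewrite Ropp_0;
      replace (- (_ * / ln 2)) with ((- (y * ln y0 - y * ln y + ((1 - y) * ln (1 - y0) - (1 - y) * ln (1 - y)))) * / ln 2) by ring;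
      apply Rmult_le_pos; [lra | left; apply Rinv_0_lt_compat; auto]). }
  replace (- (y * (ln y / ln 2)) - (1 - y) * (ln (1 - y) / ln 2)) with
    (- (y0 * (ln y0 / ln 2)) - (1 - y0) * (ln (1 - y0) / ln 2) + (y - y0) * (ln (1 - y0) / ln 2 - ln y0 / ln 2)
     + (y * ln y0 - y * ln y + ((1 - y) * ln (1 - y0) - (1 - y) * ln (1 - y))) / ln 2)
    by (field; lra).
  lra.
Qed.

Lemma gfun_lt u v : 0 < u -> u < v -> v < 1 -> gfun v < gfun u.
Proof.
  intros. unfold gfun. apply log2_lt.
  - apply Rdiv_lt_0_compat; lra.
  - apply Rmult_lt_reg_r with (r := u * v); [nra|].
    unfold Rdiv. replace ((1 - v) * / v * (u * v)) with ((1 - v) * u) by (field; lra).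
    replace ((1 - u) * / u * (u * v)) with ((1 - u) * v) by (field; lra). nra.
Qed.

Lemma gfun_le u v : 0 < u -> u <= v -> v < 1 -> gfun v <= gfun u.
Proof.
  intros. destruct (Req_dec u v) as [->|]; [lra|]. left; apply gfun_lt; lra.
Qed.

Section Real.
Variables al be : R.
Hypothesis Hal : 0 <= al <= 1.
Hypothesis Hbe : 0 <= be <= 1.
Hypothesis Hab : al + be <> 1.

Lemma core s V W : 0 <= V <= W ->
  W * log2 W
  - sumB (fun c => (V * qs al be c s + (W - V) * qn al be c s) * log2 (V * qs al be c s + (W - V) * qn al be c s))
  - (V * Hb al + (W - V) * Hb be) = W * Fk al be (V / W).
Proof.
  clear Hab. intros HV.
  destruct (Req_dec W 0) as [EW|NW].
  { assert (V = 0) by lra. subst. unfold sumB. ring. }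
  assert (HW : 0 < W) by lra.
  set (L := V * al + (W - V) * (1 - be)).
  assert (HL : 0 <= L <= W) by (unfold L; split; nra).
  assert (ES : sumB (fun c => (V * qs al be c s + (W - V) * qn al be c s) * log2 (V * qs al be c s + (W - V) * qn al be c s))
               = L * log2 L + (W - L) * log2 (W - L)).
  { unfold sumB, qs, qn, L. destruct s; simpl.
    - replace (V * (1 - al) + (W - V) * be) with (W - (V * al + (W - V) * (1 - be))) by ring. ring.
    - replace (V * (1 - al) + (W - V) * be) with (W - (V * al + (W - V) * (1 - be))) by ring. ring. }
  rewrite ES.
  assert (EL : lambar al be (V / W) = L / W) by (unfold lambar, L; field; lra).
  assert (E1 : 1 - L / W = (W - L) / W) by (field; lra).
  unfold Fk. set (ha := Hb al). set (hb := Hb be). rewrite EL. unfold Hb. rewrite !plog_eq, E1.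
  assert (A1 : W * (L / W * log2 (L / W)) = L * log2 L - L * log2 W).
  { rewrite <- xlog_div by lra. field; lra. }
  assert (A2 : W * ((W - L) / W * log2 ((W - L) / W)) = (W - L) * log2 (W - L) - (W - L) * log2 W).
  { rewrite <- xlog_div by lra. field; lra. }
  transitivity (- (W * (L / W * log2 (L / W))) - W * ((W - L) / W * log2 ((W - L) / W)) - V * ha - (W - V) * hb).
  - rewrite A1, A2. ring.
  - field; lra.
Qed.

Lemma lambar_range x : 0 <= x <= 1 -> 0 <= lambar al be x <= 1.
Proof. clear Hab. intros. unfold lambar. split; nra. Qed.

Lemma F_tangent k x : 0 < lambar al be k < 1 -> 0 <= x <= 1 ->
  Fk al be x <= Fk al be k + dk al be k * (x - k).
Proof.
  clear Hab. intros Hk Hx. pose proof (Hb_tangent _ _ Hk (lambar_range x Hx)).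
  assert (E : (lambar al be x - lambar al be k) * gfun (lambar al be k)
              = (al + be - 1) * gfun (lambar al be k) * (x - k)) by (unfold lambar; ring).
  unfold Fk, dk. rewrite E in H. nra.
Qed.

Lemma secant u v l : 0 <= u -> u < v -> v <= 1 -> 0 < l < 1 ->
  gfun l * (v - u) = Hb v - Hb u -> u <= l <= v.
Proof.
  intros Hu Huv Hv Hl Hs. split.
  - destruct (Req_dec u 0) as [->|Hu0]; [lra|].
    pose proof (Hb_tangent u v ltac:(lra) ltac:(lra)).
    assert (gfun l <= gfun u) by nra.
    destruct (Rlt_le_dec l u); [|auto].
    pose proof (gfun_lt l u ltac:(lra) ltac:(lra) ltac:(lra)). lra.
  - destruct (Req_dec v 1) as [->|Hv1]; [lra|].
    pose proof (Hb_tangent v u ltac:(lra) ltac:(lra)).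
    assert (gfun v <= gfun l) by nra.
    destruct (Rlt_le_dec v l); [|auto].
    pose proof (gfun_lt v l ltac:(lra) ltac:(lra) ltac:(lra)). lra.
Qed.

Lemma X_pos : 0 < Rpower 2 (mu al be).
Proof. unfold Rpower. apply exp_pos. Qed.

Lemma lam_bounds : 0 < lam al be < 1.
Proof.
  pose proof X_pos. unfold lam. split.
  - apply Rinv_0_lt_compat. lra.
  - rewrite <- Rinv_1. apply Rinv_lt_contravar; lra.
Qed.

Lemma gfun_lam : gfun (lam al be) = mu al be.
Proof.
  pose proof X_pos. unfold gfun, lam.
  replace ((1 - / (1 + Rpower 2 (mu al be))) / / (1 + Rpower 2 (mu al be))) with (Rpower 2 (mu al be))
    by (field; lra).
  apply log2_Rpower2.
Qed.

Lemma nu_eq : nu al be * (al + be - 1) = lam al be - (1 - be).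
Proof.
  pose proof X_pos. unfold nu, lam. field. split; lra.
Qed.

Lemma lambar_nu : lambar al be (nu al be) = lam al be.
Proof. pose proof nu_eq. unfold lambar. nra. Qed.

Lemma nu_bounds : 0 <= nu al be <= 1.
Proof.
  pose proof nu_eq. pose proof lam_bounds. pose proof gfun_lam.
  assert (Hmu : mu al be * (1 - al - be) = Hb be - Hb al) by (unfold mu; field; lra).
  destruct (Rlt_le_dec al (1 - be)).
  - assert (al <= lam al be <= 1 - be).
    { apply secant; try lra. rewrite H1, Hb_sym. nra. }
    nra.
  - assert (1 - be <= lam al be <= al).
    { apply secant; try lra. rewrite H1, Hb_sym. nra. }
    nra.
Qed.

Lemma dk_nu : dk al be (nu al be) = 0.
Proof.
  unfold dk. rewrite lambar_nu, gfun_lam. unfold mu. field. lra.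
Qed.

Lemma lambar_pos k : 0 < k <= nu al be -> 0 < lambar al be k < 1.
Proof.
  intros Hk. pose proof nu_eq. pose proof lam_bounds.
  assert (E : lambar al be k * nu al be = (nu al be - k) * (1 - be) + k * lam al be)
    by (unfold lambar; nra).
  assert (0 < nu al be) by lra.
  split; nra.
Qed.

Lemma dk_nonneg k : 0 < k <= nu al be -> 0 <= dk al be k.
Proof.
  intros Hk. pose proof (lambar_pos k Hk) as Hl. pose proof lam_bounds.
  pose proof dk_nu as D. pose proof nu_eq.
  assert (E : lambar al be k - lam al be = (al + be - 1) * (k - nu al be)) by (unfold lambar; nra).
  unfold dk in *. rewrite lambar_nu in D.
  destruct (Rlt_le_dec 0 (al + be - 1)).
  - assert (lambar al be k <= lam al be) by nra.
    pose proof (gfun_le _ _ (proj1 Hl) H1 (proj2 H)). nra.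
  - assert (lam al be <= lambar al be k) by (assert (al + be - 1 < 0) by lra; nra).
    pose proof (gfun_le _ _ (proj1 H) H1 (proj2 Hl)).
    assert (al + be - 1 < 0) by lra. nra.
Qed.

End Real.

Lemma sumL_le {A} (L : list A) f g : (forall x, In x L -> f x <= g x) -> sumL L f <= sumL L g.
Proof.
  induction L as [|x L IH]; simpl; intros H; [lra|].
  assert (f x <= g x) by auto. assert (sumL L f <= sumL L g) by auto. lra.
Qed.

Lemma sumL_lin {A} (L : list A) f g a b :
  sumL L (fun x => f x * a + g x * b) = sumL L f * a + sumL L g * b.
Proof. rewrite sumL_plus, sumL_scal_r, sumL_scal_r. auto. Qed.

Lemma decomp i (G : list bool -> list bool -> R) :
  sumL (blists (S i)) (fun x => sumL (blists (S i)) (fun y => G x y)) =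
  sumL (blists i) (fun z => sumL (blists i) (fun xz =>
     sumB (fun a => sumB (fun c => G (xz ++ [a]) (z ++ [c]))))).
Proof.
  rewrite blists_S.
  transitivity (sumL (blists i) (fun xz => sumL (blists i) (fun z =>
     sumB (fun a => sumB (fun c => G (xz ++ [a]) (z ++ [c])))))).
  - apply sumL_ext_in. intros xz _.
    transitivity (sumB (fun a => sumL (blists i) (fun z => sumB (fun c => G (xz ++ [a]) (z ++ [c]))))).
    + apply sumB_ext. intros a. apply blists_S.
    + apply sumB_sumL.
  - apply sumL_exchange.
Qed.

Section Proc.
Variables (al be : R) (b0 : bool) (pol : policy).
Hypothesis Hal : 0 <= al <= 1.
Hypothesis Hbe : 0 <= be <= 1.
Hypothesis Hpol : valid_policy pol.

Definition Jn i xz z := joint al be b0 pol i xz z.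
Definition Wz i z := sumL (blists i) (fun xz => Jn i xz z).
Definition Vz i z := sumL (blists i) (fun xz => Jn i xz z * pr (pol i xz z) (last z b0)).

Lemma Psnoc i xz z a c : In xz (blists i) -> In z (blists i) ->
  P_i al be b0 pol i (xz ++ [a]) (z ++ [c]) =
  Jn i xz z * pr (pol i xz z) a * bssc_Q al be c a (last z b0).
Proof.
  intros H1 H2. unfold P_i, Jn. rewrite joint_snoc; try (apply blists_length; auto). ring.
Qed.

Lemma Jn_nonneg i xz z : 0 <= Jn i xz z.
Proof. apply joint_nonneg; auto. Qed.

Lemma VW i z : 0 <= Vz i z <= Wz i z.
Proof.
  unfold Vz, Wz. split.
  - apply sumL_nonneg. intros. apply Rmult_le_pos; [apply Jn_nonneg|apply pr_bounds, Hpol].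
  - apply sumL_le. intros. pose proof (Jn_nonneg i x z). pose proof (pr_bounds (pol i x z) (last z b0) (Hpol _ _ _)). nra.
Qed.

Lemma mass J p s : sumB (fun a => sumB (fun c => J * pr p a * bssc_Q al be c a s)) = J.
Proof. unfold sumB, bssc_Q. destruct s; simpl; ring. Qed.

Lemma massQ J p c s : sumB (fun a => J * pr p a * bssc_Q al be c a s)
  = J * pr p s * qs al be c s + (J - J * pr p s) * qn al be c s.
Proof. unfold sumB, bssc_Q, qs, qn. destruct s, c; simpl; ring. Qed.

Lemma Pz_eq i z : In z (blists i) -> P_z al be b0 pol i z = Wz i z.
Proof.
  intros Hz. unfold P_z. rewrite blists_S. unfold Wz. apply sumL_ext_in. intros xz Hxz.
  rewrite <- (mass (Jn i xz z) (pol i xz z) (last z b0)).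
  apply sumB_ext; intros a; apply sumB_ext; intros c. apply Psnoc; auto.
Qed.

Lemma Yeq i z c : In z (blists i) ->
  sumL (blists i) (fun xz => sumB (fun a => Jn i xz z * pr (pol i xz z) a * bssc_Q al be c a (last z b0)))
  = Vz i z * qs al be c (last z b0) + (Wz i z - Vz i z) * qn al be c (last z b0).
Proof.
  intros Hz. unfold Vz, Wz. rewrite <- sumL_minus, <- sumL_lin.
  apply sumL_ext_in. intros xz _. rewrite massQ. ring.
Qed.

Lemma Pyz_eq i z c : In z (blists i) -> P_yz al be b0 pol i (z ++ [c]) =
  Vz i z * qs al be c (last z b0) + (Wz i z - Vz i z) * qn al be c (last z b0).
Proof.
  intros Hz. rewrite <- Yeq by auto. unfold P_yz. rewrite blists_S.
  apply sumL_ext_in. intros xz Hxz. apply sumB_ext; intros a. apply Psnoc; auto.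
Qed.

Lemma Pxz_eq i xz z a : In xz (blists i) -> In z (blists i) ->
  P_xz al be b0 pol i (xz ++ [a]) z = Jn i xz z * pr (pol i xz z) a.
Proof.
  intros H1 H2. unfold P_xz, sumB. rewrite !Psnoc by auto.
  pose proof (Q_sum al be a (last z b0)). nra.
Qed.

Lemma firstn_snoc' i (z : list bool) c : In z (blists i) -> firstn i (z ++ [c]) = z.
Proof.
  intros Hz. apply blists_length in Hz. rewrite firstn_snoc by lia. rewrite <- Hz. apply firstn_all.
Qed.

Lemma nth_snoc' i (z : list bool) c : In z (blists i) -> nth i (z ++ [c]) false = c.
Proof.
  intros Hz. apply blists_length in Hz. rewrite <- Hz. apply nth_middle.
Qed.

Lemma per_xz J p s Wv (Yf : bool -> R) :
  sumB (fun a => sumB (fun c =>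
    J * pr p a * bssc_Q al be c a s * log2 (bssc_Q al be c a s)
    + J * pr p a * bssc_Q al be c a s * log2 Wv
    - J * pr p a * bssc_Q al be c a s * log2 (Yf c)))
  = J * (log2 Wv - Hb be - qn al be false s * log2 (Yf false) - qn al be true s * log2 (Yf true))
    + (J * pr p s) * (Hb be - Hb al - (qs al be false s - qn al be false s) * log2 (Yf false)
                      - (qs al be true s - qn al be true s) * log2 (Yf true)).
Proof.
  unfold sumB, bssc_Q, qs, qn, Hb. rewrite !plog_eq. destruct s; simpl; ring.
Qed.

Lemma cmi_eq i : cmi_term al be b0 pol i =
  sumL (blists i) (fun z => Wz i z * Fk al be (Vz i z / Wz i z)).
Proof.
  unfold cmi_term. rewrite decomp. apply sumL_ext_in. intros z Hz.
  set (s := last z b0).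
  set (Yf := fun c => Vz i z * qs al be c s + (Wz i z - Vz i z) * qn al be c s).
  transitivity (sumL (blists i) (fun xz =>
    Jn i xz z * (log2 (Wz i z) - Hb be - qn al be false s * log2 (Yf false) - qn al be true s * log2 (Yf true))
    + (Jn i xz z * pr (pol i xz z) s) * (Hb be - Hb al - (qs al be false s - qn al be false s) * log2 (Yf false)
                      - (qs al be true s - qn al be true s) * log2 (Yf true)))).
  - apply sumL_ext_in. intros xz Hxz. rewrite <- per_xz.
    apply sumB_ext; intros a; apply sumB_ext; intros c.
    rewrite !firstn_snoc' by auto. rewrite Psnoc, Pxz_eq, Pz_eq by auto.
    fold s.
    assert (HY : P_yz al be b0 pol i (z ++ [c]) = Yf c) by (apply Pyz_eq; auto).
    pose proof (Jn_nonneg i xz z) as HJ.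
    pose proof (pr_bounds (pol i xz z) a (Hpol _ _ _)) as Hp.
    pose proof (Q_bounds al be c a s Hal Hbe) as HQ.
    rewrite term_eq.
    + rewrite HY. ring.
    + apply Rmult_le_pos; lra.
    + lra.
    + apply Rle_trans with (Jn i xz z).
      { replace (Jn i xz z * pr (pol i xz z) a * bssc_Q al be c a s) with
          (Jn i xz z * (pr (pol i xz z) a * bssc_Q al be c a s)) by ring.
        rewrite <- (Rmult_1_r (Jn i xz z)) at 2. apply Rmult_le_compat_l; [lra|]. nra. }
      unfold Wz.
      apply (sumL_ge_term _ (fun xz => Jn i xz z)); auto. intros; apply Jn_nonneg.
    + unfold P_yz. rewrite <- Psnoc by auto.
      apply (sumL_ge_term _ (fun x => P_i al be b0 pol i x (z ++ [c]))).
      * intros. apply joint_nonneg; auto.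
      * apply blists_In. rewrite length_app. simpl. rewrite (blists_length _ _ Hxz). lia.
  - rewrite sumL_lin. fold (Wz i z).
    change (sumL (blists i) (fun x => Jn i x z * pr (pol i x z) s)) with (Vz i z).
    rewrite <- (core al be Hal Hbe s (Vz i z) (Wz i z) (VW i z)).
    unfold Yf, sumB. clearbody s. ring.
Qed.

Lemma cost_eq i : cost_term al be b0 pol i = sumL (blists i) (fun z => Vz i z).
Proof.
  unfold cost_term. rewrite decomp. apply sumL_ext_in. intros z Hz. unfold Vz.
  apply sumL_ext_in. intros xz Hxz.
  transitivity (sumB (fun a => sumB (fun c => Jn i xz z * pr (pol i xz z) a * bssc_Q al be c a (last z b0)
     * gam a (last z b0)))).
  - apply sumB_ext; intros a; apply sumB_ext; intros c.
    rewrite Psnoc, firstn_snoc', nth_snoc' by auto. auto.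
  - unfold sumB, bssc_Q, gam. destruct (last z b0); simpl; ring.
Qed.

Lemma sumW i : sumL (blists i) (fun z => Wz i z) = 1.
Proof.
  induction i.
  - simpl. unfold Wz, Jn. simpl. unfold joint. simpl. ring.
  - unfold Wz. rewrite sumL_exchange. rewrite decomp. rewrite <- IHi.
    apply sumL_ext_in. intros z Hz. unfold Wz. apply sumL_ext_in. intros xz Hxz.
    rewrite <- (mass (Jn i xz z) (pol i xz z) (last z b0)).
    apply sumB_ext; intros a; apply sumB_ext; intros c.
    unfold Jn. rewrite joint_snoc; try (apply blists_length; auto). ring.
Qed.

End Proc.

Lemma sum_const c n : sum_f_R0 (fun _ => c) n = INR (S n) * c.
Proof. induction n; simpl sum_f_R0. simpl; ring. rewrite IHn, !S_INR. ring. Qed.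

Lemma sum_lin (c : nat -> R) a d k n :
  sum_f_R0 (fun i => a + d * (c i - k)) n = INR (S n) * a + d * (sum_f_R0 c n - INR (S n) * k).
Proof. induction n; simpl sum_f_R0. simpl; ring. rewrite IHn, !S_INR. ring. Qed.

Lemma sum_nonneg_zero (c : nat -> R) n : (forall i, 0 <= c i) ->
  sum_f_R0 c n <= 0 -> forall i, (i <= n)%nat -> c i = 0.
Proof.
  induction n; intros H Hs i Hi.
  - simpl in Hs. assert (i = 0%nat) by lia. subst. specialize (H 0%nat). lra.
  - simpl in Hs. assert (0 <= c (S n)) by apply H.
    assert (0 <= sum_f_R0 c n) by (apply cond_pos_sum; auto).
    destruct (Nat.eq_dec i (S n)) as [->|]; [lra|].
    apply IHn; auto; [lra|lia].
Qed.

Lemma INR_S_pos n : 0 < INR (S n).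
Proof. apply lt_0_INR. lia. Qed.

Lemma valid_TI b0 ka : 0 <= ka <= 1 -> valid_policy (pi_TI b0 ka).
Proof. intros H i xs ys. unfold pi_TI. destruct (last ys b0); lra. Qed.

Section Main.
Variables al be : R.
Hypothesis Hal : 0 <= al <= 1.
Hypothesis Hbe : 0 <= be <= 1.
Hypothesis Hab : al + be <> 1.

Lemma V_TI b0 ka i z : Vz al be b0 (pi_TI b0 ka) i z = ka * Wz al be b0 (pi_TI b0 ka) i z.
Proof.
  unfold Vz, Wz. rewrite <- sumL_scal. apply sumL_ext_in. intros xz _.
  unfold pi_TI. destruct (last z b0); simpl; ring.
Qed.

Lemma cmi_TI b0 ka i : 0 <= ka <= 1 -> cmi_term al be b0 (pi_TI b0 ka) i = Fk al be ka.
Proof.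
  intros Hk. rewrite cmi_eq by (auto; apply valid_TI; auto).
  rewrite <- (Rmult_1_l (Fk al be ka)).
  rewrite <- (sumW al be b0 (pi_TI b0 ka) i) by (auto; apply valid_TI; auto).
  rewrite <- sumL_scal_r. apply sumL_ext_in. intros z _. rewrite V_TI.
  destruct (Req_dec (Wz al be b0 (pi_TI b0 ka) i z) 0) as [E|E].
  - rewrite E. ring.
  - f_equal. f_equal. field. auto.
Qed.

Lemma cost_TI b0 ka i : 0 <= ka <= 1 -> cost_term al be b0 (pi_TI b0 ka) i = ka.
Proof.
  intros Hk. rewrite cost_eq.
  transitivity (sumL (blists i) (fun z => Wz al be b0 (pi_TI b0 ka) i z) * ka).
  - rewrite <- sumL_scal_r. apply sumL_ext_in. intros. rewrite V_TI. ring.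
  - rewrite sumW by (auto; apply valid_TI; auto). ring.
Qed.

Lemma DI_TI b0 ka n : 0 <= ka <= 1 -> DI al be b0 (pi_TI b0 ka) n = INR (S n) * Fk al be ka.
Proof.
  intros Hk. unfold DI. rewrite <- sum_const. apply sum_eq. intros. apply cmi_TI; auto.
Qed.

Lemma avg_TI b0 ka n : 0 <= ka <= 1 -> avg_cost al be b0 (pi_TI b0 ka) n = ka.
Proof.
  intros Hk. unfold avg_cost.
  rewrite (sum_eq _ (fun _ => ka)) by (intros; apply cost_TI; auto).
  rewrite sum_const. pose proof (INR_S_pos n). field. lra.
Qed.

Lemma feasible_TI b0 ka n k : 0 <= ka <= 1 -> ka <= k -> feasible al be b0 n k (pi_TI b0 ka).
Proof. intros. split; [apply valid_TI; auto|]. rewrite avg_TI; auto. Qed.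

Lemma cost_nonneg b0 pol i : valid_policy pol -> 0 <= cost_term al be b0 pol i.
Proof.
  intros Hp. rewrite cost_eq. apply sumL_nonneg. intros. apply (VW al be b0 pol Hal Hbe Hp).
Qed.

Lemma DI_tangent b0 pol n k : valid_policy pol -> 0 < lambar al be k < 1 ->
  DI al be b0 pol n <= INR (S n) * Fk al be k + dk al be k * (sum_f_R0 (cost_term al be b0 pol) n - INR (S n) * k).
Proof.
  intros Hp Hk. rewrite <- sum_lin. unfold DI. apply sum_Rle. intros i _.
  rewrite cmi_eq, cost_eq by auto.
  replace (Fk al be k + dk al be k * (sumL (blists i) (fun z => Vz al be b0 pol i z) - k)) with
    (sumL (blists i) (fun z => Wz al be b0 pol i z * Fk al be k
        + dk al be k * (Vz al be b0 pol i z - k * Wz al be b0 pol i z))).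
  2: { rewrite sumL_plus, sumL_scal, sumL_minus, sumL_scal, sumL_scal_r, sumW by auto. change (sumL (blists i) (Vz al be b0 pol i)) with (sumL (blists i) (fun z => Vz al be b0 pol i z)). ring. }
  apply sumL_le. intros z _.
  pose proof (VW al be b0 pol Hal Hbe Hp i z) as HV.
  destruct (Req_dec (Wz al be b0 pol i z) 0) as [E|E].
  - assert (Vz al be b0 pol i z = 0) by lra. rewrite E, H. lra.
  - set (W := Wz al be b0 pol i z) in *. set (V := Vz al be b0 pol i z) in *.
    assert (HW : 0 < W) by lra.
    assert (Hx : 0 <= V / W <= 1).
    { split. unfold Rdiv; apply Rmult_le_pos; [lra| left; apply Rinv_0_lt_compat; lra].
      apply Rmult_le_reg_r with W; auto. unfold Rdiv. rewrite Rmult_assoc, Rinv_l; lra. }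
    pose proof (F_tangent al be Hal Hbe k (V / W) Hk Hx).
    assert (W * Fk al be (V / W) <= W * (Fk al be k + dk al be k * (V / W - k))) by
      (apply Rmult_le_compat_l; lra).
    replace (W * (Fk al be k + dk al be k * (V / W - k))) with
      (W * Fk al be k + dk al be k * (V - k * W)) in H0 by (field; lra).
    lra.
Qed.

Lemma DI_bound b0 pol n ka : 0 <= ka <= nu al be -> feasible al be b0 n ka pol ->
  DI al be b0 pol n <= INR (S n) * Fk al be ka.
Proof.
  intros Hk [Hp Hc]. unfold avg_cost in Hc.
  pose proof (INR_S_pos n) as HS.
  assert (Hsum : sum_f_R0 (cost_term al be b0 pol) n <= INR (S n) * ka).
  { apply Rmult_le_reg_l with (/ INR (S n)). apply Rinv_0_lt_compat; auto.
    replace (/ INR (S n) * (INR (S n) * ka)) with ka by (field; lra). auto. }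
  destruct (Req_dec ka 0) as [E|E].
  - subst ka. rewrite Rmult_0_r in Hsum.
    assert (Hz : forall i, (i <= n)%nat -> cost_term al be b0 pol i = 0).
    { apply sum_nonneg_zero; auto. intros; apply cost_nonneg; auto. }
    unfold DI. rewrite <- sum_const. right. apply sum_eq. intros i Hi.
    rewrite cmi_eq by auto. rewrite <- (Rmult_1_l (Fk al be 0)).
    rewrite <- (sumW al be b0 pol i) by auto. rewrite <- sumL_scal_r.
    apply sumL_ext_in. intros z Hz'.
    specialize (Hz i Hi). rewrite cost_eq in Hz.
    assert (HV0 : Vz al be b0 pol i z = 0).
    { apply (sumL_eq0 (blists i) (fun z => Vz al be b0 pol i z)); auto. intros. apply (VW al be b0 pol Hal Hbe Hp). }
    rewrite HV0. unfold Rdiv. rewrite Rmult_0_l. auto.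
  - assert (Hk' : 0 < ka <= nu al be) by lra.
    pose proof (DI_tangent b0 pol n ka Hp (lambar_pos al be Hbe Hab ka Hk')).
    pose proof (dk_nonneg al be Hbe Hab ka Hk').
    assert (dk al be ka * (sum_f_R0 (cost_term al be b0 pol) n - INR (S n) * ka) <= 0).
    { apply Rmult_le_0_l_compat || nra. }
    lra.
Qed.

Lemma MI2_eq b0 p : 0 <= p <= 1 ->
  MI2 (fun a b => pr p a * bssc_Q al be b a b0) = Fk al be (pr p b0).
Proof.
  intros Hp. unfold MI2.
  set (Yf := fun c => 1 * pr p b0 * qs al be c b0 + (1 - 1 * pr p b0) * qn al be c b0).
  transitivity (sumB (fun a => sumB (fun c =>
    1 * pr p a * bssc_Q al be c a b0 * log2 (bssc_Q al be c a b0)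
    + 1 * pr p a * bssc_Q al be c a b0 * log2 1
    - 1 * pr p a * bssc_Q al be c a b0 * log2 (Yf c)))).
  - apply sumB_ext; intros a; apply sumB_ext; intros c.
    assert (E1 : sumB (fun b' => pr p a * bssc_Q al be b' a b0) = pr p a).
    { unfold sumB. pose proof (Q_sum al be a b0). nra. }
    assert (E2 : sumB (fun a' => pr p a' * bssc_Q al be c a' b0) = Yf c).
    { unfold Yf. rewrite <- massQ. apply sumB_ext. intros; ring. }
    rewrite E1, E2.
    pose proof (pr_bounds p a Hp). pose proof (Q_bounds al be c a b0 Hal Hbe).
    rewrite !Rmult_1_l.
    replace (pr p a * bssc_Q al be c a b0 / (pr p a * Yf c)) with
      (pr p a * bssc_Q al be c a b0 * 1 / (pr p a * Yf c)) by (rewrite Rmult_1_r; auto).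
    apply term_eq; try lra.
    + nra.
    + rewrite <- E2. unfold sumB.
      pose proof (pr_bounds p false Hp). pose proof (pr_bounds p true Hp).
      pose proof (Q_bounds al be c false b0 Hal Hbe). pose proof (Q_bounds al be c true b0 Hal Hbe).
      destruct a; nra.
  - rewrite per_xz. rewrite log2_1.
    assert (HV : 0 <= pr p b0 <= 1) by (apply pr_bounds; auto).
    pose proof (core al be Hal Hbe b0 (pr p b0) 1 HV) as C.
    rewrite log2_1 in C. rewrite Rdiv_1_r, !Rmult_1_l in C. rewrite <- C.
    unfold Yf, sumB; cbv beta. rewrite !Rmult_1_l. ring.
Qed.

Lemma SL_max b0 ka : 0 <= ka <= nu al be -> is_max (SLset al be b0 ka) (Fk al be ka).
Proof.
  intros Hk. pose proof (nu_bounds al be Hal Hbe Hab). split.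
  - exists (if b0 then ka else 1 - ka). split; [destruct b0; lra|].
    assert (E : pr (if b0 then ka else 1 - ka) b0 = ka) by (destruct b0; simpl; ring).
    rewrite E. split; [lra|]. rewrite MI2_eq by (destruct b0; lra). rewrite E. auto.
  - intros r [p [Hp [Hc ->]]]. rewrite MI2_eq by auto.
    pose proof (pr_bounds p b0 Hp).
    destruct (Req_dec ka 0) as [E|E].
    + assert (pr p b0 = ka) by lra. rewrite H1. lra.
    + assert (Hk' : 0 < ka <= nu al be) by lra.
      pose proof (F_tangent al be Hal Hbe ka (pr p b0) (lambar_pos al be Hbe Hab ka Hk') H0).
      pose proof (dk_nonneg al be Hbe Hab ka Hk').
      assert (dk al be ka * (pr p b0 - ka) <= 0) by nra. lra.
Qed.

End Main.

Lemma const_cv (u : nat -> R) l : (forall n, u n = l) -> Un_cv u l.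
Proof.
  intros H eps Heps. exists 0%nat. intros n _. rewrite H. unfold R_dist.
  rewrite Rminus_diag, Rabs_R0. auto.
Qed.

Theorem mainTheorem10 (al be : R) (Hal : 0 <= al <= 1) (Hbe : 0 <= be <= 1)
  (Hab : al + be <> 1) :
  (* (a) *)
  (forall ka : R, 0 <= ka <= nu al be -> forall (n : nat) (b0 : bool),
     feasible al be b0 n ka (pi_TI b0 ka) /\
     (forall pol, feasible al be b0 n ka pol ->
        DI al be b0 pol n <= DI al be b0 (pi_TI b0 ka) n) /\
     (exists m, is_max (SLset al be b0 ka) m /\
                DI al be b0 (pi_TI b0 ka) n = INR (S n) * m) /\
     (forall (i : nat) (y : list bool), In y (blists (S i)) ->
        P_z al be b0 (pi_TI b0 ka) i (firstn i y) <> 0 ->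
        P_yz al be b0 (pi_TI b0 ka) i y / P_z al be b0 (pi_TI b0 ka) i (firstn i y)
        = (if Bool.eqb (nth i y false) (last (firstn i y) b0)
           then lambar al be ka else 1 - lambar al be ka))) /\
  (* (b) *)
  (forall (ka : R) (b0 : bool), 0 <= ka ->
     exists C : nat -> R,
       (forall n, is_lub (DIset al be b0 n ka) (C n)) /\
       Un_cv (fun n => C n / INR (S n))
         (if Rle_dec ka (nu al be)
          then Hb (lambar al be ka) - ka * Hb al - (1 - ka) * Hb be
          else Hb (lam al be) - nu al be * Hb al - (1 - nu al be) * Hb be)).
Proof.
  pose proof (nu_bounds al be Hal Hbe Hab) as Hnu.
  split.
  - intros ka Hk n b0.
    assert (Hk1 : 0 <= ka <= 1) by lra.
    split; [apply feasible_TI; lra|].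
    split; [intros pol Hf; rewrite (DI_TI al be Hal Hbe) by auto;
            apply (DI_bound al be Hal Hbe Hab b0 pol n ka); auto|].
    split; [exists (Fk al be ka); split;
            [apply (SL_max al be Hal Hbe Hab); auto | apply (DI_TI al be Hal Hbe); auto]|].
    intros i y Hy Hz.
    assert (Hl : length y = S i) by (apply blists_length; auto).
    destruct (exists_last (l := y)) as [z [c ->]].
    { intro E; subst; simpl in Hl; discriminate. }
    assert (Hzi : In z (blists i)).
    { apply blists_In. rewrite length_app in Hl. simpl in Hl. lia. }
    rewrite firstn_snoc', nth_snoc' in * by auto.
    rewrite Pz_eq in * by auto. rewrite Pyz_eq by auto. rewrite V_TI in *.
    unfold qs, qn, lambar.
    destruct (Bool.eqb c (last z b0)); field; auto.
  - intros ka b0 Hk. destruct (Rle_dec ka (nu al be)) as [Hle|Hgt].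
    + exists (fun n => INR (S n) * Fk al be ka). split.
      * intros n. split.
        -- intros r [pol [Hf ->]]. apply (DI_bound al be Hal Hbe Hab b0 pol n ka); auto.
        -- intros b Hb'. apply Hb'. exists (pi_TI b0 ka). split.
           ++ apply feasible_TI; lra.
           ++ rewrite (DI_TI al be Hal Hbe); auto; lra.
      * apply const_cv. intros n. unfold Fk. pose proof (INR_S_pos n). field. lra.
    + assert (Hl : 0 < lambar al be (nu al be) < 1).
      { rewrite lambar_nu by auto. apply lam_bounds. }
      exists (fun n => INR (S n) * Fk al be (nu al be)). split.
      * intros n. split.
        -- intros r [pol [[Hp Hf] ->]].
           pose proof (DI_tangent al be Hal Hbe b0 pol n (nu al be) Hp Hl).
           rewrite dk_nu in H by auto. lra.
        -- intros b Hb'. apply Hb'. exists (pi_TI b0 (nu al be)). split.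
           ++ apply feasible_TI; lra.
           ++ rewrite (DI_TI al be Hal Hbe); auto.
      * apply const_cv. intros n. unfold Fk. rewrite lambar_nu by auto.
        pose proof (INR_S_pos n). field. lra.
Qed.
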